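(* Let $M\in\mathbb{N}$, let $I$ be a finite set and let $g_\bullet\colon\mathbb{Z}\to\{0,1,\dots,M-1\}$ be a gp map parametrised by $\mathbb{R}^I$. Then there exist a finite set $J$ and a gp map $\tilde g_\bullet\colon\mathbb{Z}\to\{0,1,\dots,M-1\}$ parametrised by $[0,1)^J$ such that $\tilde g_\bullet$ extends $g_\bullet$.
   Context: A generalised polynomial (gp) map $\mathbb{R}^d\to\mathbb{R}$ is an element of the smallest family containing all polynomial maps and closed under pointwise sum, pointwise product and pointwise integer part; a map into $\mathbb{R}^m$ is gp if each coordinate is. For pairwise disjoint finite sets $I_r,I_i,I_f$ and $\Omega = \mathbb{R}^{I_r}\times\mathbb{Z}^{I_i}\times[0,1)^{I_f}$, a gp map $\mathbb{Z}\to S$ ($S\subset\mathbb{R}$) parametrised by $\Omega$ is a family $(g_\alpha)_{\alpha\in\Omega}$ of maps $\mathbb{Z}\to S$ such that $(\alpha,n)\mapsto g_\alpha(n)$ is the restriction to $\Omega\times\mathbb{Z}$ of a gp map $\mathbb{R}^{I_r\cup I_i\cup I_f}\times\mathbb{R}\to\mathbb{R}$. If $g_\bullet$ is parametrised by $\Omega$ and $h_\bullet$ by $\Omega'=\mathbb{R}^{J_r}\times\mathbb{Z}^{J_i}\times[0,1)^{J_f}$, then $h_\bullet$ extends $g_\bullet$ if there is a gp map $\varphi\colon\mathbb{R}^{I_r\cup I_i\cup I_f}\to\mathbb{R}^{J_r\cup J_i\cup J_f}$ with $\varphi(\Omega)\subset\Omega'$ and $g_\alpha=h_{\varphi(\alpha)}$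 for all $\alpha\in\Omega$. *)

(* Defs.v *)
From Stdlib Require Import Reals ZArith.
From mathcomp Require Import ssreflect ssrbool eqtype fintype.
Open Scope R_scope.

(* Pointwise integer part (floor): Int_part x = up x - 1 = floor x. *)
Definition gp_floor (x : R) : R := IZR (Int_part x).

Inductive gp {K : finType} : ((K -> R) -> R) -> Prop :=
| gp_const (c : R) : gp (fun _ => c)
| gp_coord (k : K) : gp (fun x => x k)
| gp_add f g : gp f -> gp g -> gp (fun x => f x + g x)
| gp_mul f g : gp f -> gp g -> gp (fun x => f x * g x)
| gp_int f : gp f -> gp (fun x => gp_floor (f x)).

(* The point (alpha, n) of R^K x R, as a vector indexed by option K
   (None = the extra coordinate carrying n). *)
Definition join_param {K : Type} (alpha : K -> R) (n : Z) : option K -> R :=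
  fun o => match o with None => IZR n | Some k => alpha k end.

Definition gp_param (K : finType) (Omega : (K -> R) -> Prop) (S : R -> Prop)
    (g : (K -> R) -> Z -> R) : Prop :=
  exists G : (option K -> R) -> R, gp G /\
    forall alpha, Omega alpha -> forall n : Z,
      g alpha n = G (join_param alpha n) /\ S (g alpha n).

Definition gp_extends (K K' : finType) (Omega : (K -> R) -> Prop)
    (Omega' : (K' -> R) -> Prop) (g : (K -> R) -> Z -> R)
    (h : (K' -> R) -> Z -> R) : Prop :=
  exists phi : (K -> R) -> (K' -> R),
    (forall j : K', gp (fun x => phi x j)) /\
    (forall alpha, Omega alpha -> Omega' (phi alpha)) /\
    (forall alpha, Omega alpha -> forall n : Z, g alpha n = h (phi alpha) n).

Definition full_space (K : Type) : (K -> R) -> Prop := fun _ => True.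
Definition unit_cube (K : Type) : (K -> R) -> Prop :=
  fun alpha => forall k, 0 <= alpha k < 1.

Definition digits (M : nat) : R -> Prop :=
  fun y => exists k : nat, Nat.lt k M /\ y = INR k.

(* Main.v *)
Require Import Defs.
From Stdlib Require Import Reals ZArith.
From mathcomp Require Import ssreflect ssrbool eqtype fintype.
From Stdlib Require Import Lra Lia List FunctionalExtensionality.
Import ListNotations.
Open Scope R_scope.

Definition fr (x : R) : R := x - gp_floor x.
Definition isint (x : R) : Prop := exists z : Z, x = IZR z.

Lemma floor_unique (x : R) (z : Z) : IZR z <= x < IZR z + 1 -> gp_floor x = IZR z.
Proof.
  intros [H1 H2]. unfold gp_floor. destruct (base_Int_part x) as [B1 B2].
  f_equal.
  assert (A : (Int_part x < z + 1)%Z). { apply lt_IZR. rewrite plus_IZR. simpl. lra. }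
  assert (A2 : (z < Int_part x + 1)%Z). { apply lt_IZR. rewrite plus_IZR. simpl. lra. }
  lia.
Qed.

Lemma floor_bounds (x : R) : gp_floor x <= x < gp_floor x + 1.
Proof. unfold gp_floor. destruct (base_Int_part x). lra. Qed.

Lemma floor_isint x : isint (gp_floor x).
Proof. exists (Int_part x). reflexivity. Qed.

Lemma fr_bounds x : 0 <= fr x < 1.
Proof. unfold fr. pose proof (floor_bounds x). lra. Qed.

Lemma floor_add_int x z : gp_floor (x + IZR z) = gp_floor x + IZR z.
Proof.
  destruct (floor_isint x) as [w Hw]. rewrite Hw. rewrite <- plus_IZR.
  apply floor_unique. rewrite plus_IZR. rewrite <- Hw. pose proof (floor_bounds x). lra.
Qed.

Lemma floor_int z : gp_floor (IZR z) = IZR z.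
Proof. apply floor_unique. lra. Qed.

Lemma fr_id x : 0 <= x < 1 -> fr x = x.
Proof. intros H. unfold fr. rewrite (floor_unique x 0); simpl; lra. Qed.

Lemma fr_int_diff x y z : x - y = IZR z -> fr x = fr y.
Proof.
  intros H. assert (x = y + IZR z) by lra. subst x. unfold fr.
  rewrite floor_add_int. ring.
Qed.

Lemma isint_add x y : isint x -> isint y -> isint (x + y).
Proof. intros [a ->] [b ->]. exists (a + b)%Z. now rewrite plus_IZR. Qed.
Lemma isint_mul x y : isint x -> isint y -> isint (x * y).
Proof. intros [a ->] [b ->]. exists (a * b)%Z. now rewrite mult_IZR. Qed.
Lemma isint_opp x : isint x -> isint (- x).
Proof. intros [a ->]. exists (- a)%Z. now rewrite opp_IZR. Qed.
Lemma isint_1 : isint 1.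
Proof. exists 1%Z. reflexivity. Qed.

Lemma gp_subst (K K' : finType) (f : (K -> R) -> R) (u : K -> (K' -> R) -> R) :
  gp f -> (forall k, gp (u k)) -> gp (fun x => f (fun k => u k x)).
Proof.
  intros Hf Hu; induction Hf; simpl.
  - exact (gp_const c).
  - apply Hu.
  - exact (gp_add _ _ IHHf1 IHHf2).
  - exact (gp_mul _ _ IHHf1 IHHf2).
  - exact (gp_int _ IHHf).
Qed.

Lemma gp_ext_eq (K : finType) (f f' : (K -> R) -> R) : gp f -> (forall x, f x = f' x) -> gp f'.
Proof. intros H E. replace f' with f; auto. apply functional_extensionality; auto. Qed.

Lemma gp_fr (K : finType) (f : (K -> R) -> R) : gp f -> gp (fun x => fr (f x)).
Proof.
  intros H. apply (gp_ext_eq _ (fun x => f x + (fun _ => -1) x * gp_floor (f x))).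
  - apply gp_add; auto. apply gp_mul. apply gp_const. apply gp_int; auto.
  - intros x; unfold fr; simpl; ring.
Qed.

Record trip (I J : Type) := Trip { tc : (I -> R) -> R; tP : (J -> R) -> R; tN : (option J -> R) -> R }.
Arguments Trip {I J}. Arguments tc {I J}. Arguments tP {I J}. Arguments tN {I J}.
Record pr (J : Type) := Pr { pP : (J -> R) -> R; pN : (option J -> R) -> R }.
Arguments Pr {J}. Arguments pP {J}. Arguments pN {J}.

Definition evalL {I J : Type} (L : list (trip I J)) (a : I -> R) (x : option J -> R) : R :=
  fold_right (fun t acc => tc t a * tP t (fun j => x (Some j)) * tN t x + acc) 0 L.
Definition evalPN {J : Type} (L : list (pr J)) (x : option J -> R) : R :=
  fold_right (fun p acc => pP p (fun j => x (Some j)) * pN p x + acc) 0 L.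

Definition validT {I J : finType} (t : trip I J) : Prop :=
  gp (tc t) /\ (forall a, isint (tc t a)) /\ gp (tP t) /\ gp (tN t) /\
  (forall (b : J -> R) (n : Z), isint (tN t (join_param b n))).
Definition validP {J : finType} (p : pr J) : Prop :=
  gp (pP p) /\ gp (pN p) /\ (forall (b : J -> R) (n : Z), isint (pN p (join_param b n))).

Definition liftT {I J J' : Type} (s : J -> J') (t : trip I J) : trip I J' :=
  Trip (tc t) (fun b => tP t (fun j => b (s j))) (fun x => tN t (fun o => x (option_map s o))).
Definition liftP {J J' : Type} (s : J -> J') (p : pr J) : pr J' :=
  Pr (fun b => pP p (fun j => b (s j))) (fun x => pN p (fun o => x (option_map s o))).

Lemma evalL_lift {I J J'} (s : J -> J') (L : list (trip I J)) a x :
  evalL (map (liftT s) L) a x = evalL L a (fun o => x (option_map s o)).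
Proof. induction L as [|t L IH]; simpl; auto. rewrite IH. reflexivity. Qed.
Lemma evalPN_lift {J J'} (s : J -> J') (L : list (pr J)) x :
  evalPN (map (liftP s) L) x = evalPN L (fun o => x (option_map s o)).
Proof. induction L as [|t L IH]; simpl; auto. rewrite IH. reflexivity. Qed.

Lemma join_comp {J J' : Type} (s : J -> J') (b : J' -> R) n :
  (fun o => join_param b n (option_map s o)) = join_param (fun j => b (s j)) n.
Proof. apply functional_extensionality. intros [o|]; reflexivity. Qed.

Lemma gp_lift_b {J J' : finType} (s : J -> J') (f : (J -> R) -> R) :
  gp f -> gp (fun b : J' -> R => f (fun j => b (s j))).
Proof. intros H. apply (gp_subst _ _ f (fun j b => b (s j))); auto. intros k. apply gp_coord. Qed.
Lemma gp_lift_x {J J' : finType} (s : J -> J') (f : (option J -> R) -> R) :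
  gp f -> gp (fun x : option J' -> R => f (fun o => x (option_map s o))).
Proof. intros H. apply (gp_subst _ _ f (fun o x => x (option_map s o))); auto. intros k. apply gp_coord. Qed.

Lemma valid_lift {I J J' : finType} (s : J -> J') (L : list (trip I J)) :
  Forall validT L -> Forall validT (map (liftT s) L).
Proof.
  intros H. apply Forall_map. eapply Forall_impl; [|exact H].
  intros t [H1 [H2 [H3 [H4 H5]]]]. unfold validT; simpl.
  repeat split; auto.
  - apply gp_lift_b; auto.
  - apply gp_lift_x; auto.
  - intros b n. rewrite join_comp. apply H5.
Qed.
Lemma validP_lift {J J' : finType} (s : J -> J') (L : list (pr J)) :
  Forall validP L -> Forall validP (map (liftP s) L).
Proof.
  intros H. apply Forall_map. eapply Forall_impl; [|exact H].
  intros t [H3 [H4 H5]]. unfold validP; simpl.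
  repeat split; auto.
  - apply gp_lift_b; auto.
  - apply gp_lift_x; auto.
  - intros b n. rewrite join_comp. apply H5.
Qed.

Definition mulT {I J} (t1 t2 : trip I J) : trip I J :=
  Trip (fun a => tc t1 a * tc t2 a) (fun b => tP t1 b * tP t2 b) (fun x => tN t1 x * tN t2 x).
Definition mulL {I J} (L1 L2 : list (trip I J)) := flat_map (fun t1 => map (mulT t1) L2) L1.

Lemma evalL_app {I J} (L1 L2 : list (trip I J)) a x : evalL (L1 ++ L2) a x = evalL L1 a x + evalL L2 a x.
Proof. induction L1 as [|t L1 IH]. - simpl. ring. - simpl. rewrite IH. ring. Qed.
Lemma evalPN_app {J} (L1 L2 : list (pr J)) x : evalPN (L1 ++ L2) x = evalPN L1 x + evalPN L2 x.
Proof. induction L1 as [|t L1 IH]. - simpl. ring. - simpl. rewrite IH. ring. Qed.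

Lemma evalL_map_mul {I J} (t : trip I J) (L2 : list (trip I J)) a x :
  evalL (map (mulT t) L2) a x = tc t a * tP t (fun j => x (Some j)) * tN t x * evalL L2 a x.
Proof. induction L2 as [|t2 L2 IH2]. - simpl. ring. - simpl. rewrite IH2. ring. Qed.

Lemma evalL_mulL {I J} (L1 L2 : list (trip I J)) a x : evalL (mulL L1 L2) a x = evalL L1 a x * evalL L2 a x.
Proof.
  induction L1 as [|t L1 IH]. { simpl. ring. } unfold mulL in *. simpl. rewrite evalL_app IH.
  rewrite evalL_map_mul. ring.
Qed.

Lemma valid_mulL {I J : finType} (L1 L2 : list (trip I J)) :
  Forall validT L1 -> Forall validT L2 -> Forall validT (mulL L1 L2).
Proof.
  intros H1 H2. pose proof (proj1 (Forall_forall _ _) H1) as H1'. pose proof (proj1 (Forall_forall _ _) H2) as H2'.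
  clear H1 H2; rename H1' into H1; rename H2' into H2. apply Forall_forall. intros t Hin.
  unfold mulL in Hin. apply in_flat_map in Hin as [t1 [Hi1 Hi2]].
  apply in_map_iff in Hi2 as [t2 [<- Hi3]].
  destruct (H1 _ Hi1) as [A1 [A2 [A3 [A4 A5]]]].
  destruct (H2 _ Hi3) as [B1 [B2 [B3 [B4 B5]]]].
  unfold validT; simpl. repeat split.
  - apply gp_mul; auto.
  - intros a; apply isint_mul; auto.
  - apply gp_mul; auto.
  - apply gp_mul; auto.
  - intros b n; apply isint_mul; auto.
Qed.

Lemma gp_evalPN {J : finType} (L : list (pr J)) : Forall validP L -> gp (evalPN L).
Proof.
  induction L as [|p L IH]; intros H.
  - apply (gp_ext_eq _ (fun _ => 0)); [apply gp_const| reflexivity].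
  - inversion H as [|? ? [P1 [P2 P3]] HL]; subst.
    apply (gp_ext_eq _ (fun x => (fun x => pP p (fun j => x (Some j))) x * pN p x + evalPN L x)).
    + apply gp_add; auto. apply gp_mul; auto.
      apply (gp_subst _ _ (pP p) (fun j x => x (Some j))); auto. intros; apply gp_coord.
    + reflexivity.
Qed.

Definition comb {I J1 J2 : Type} (f1 : (I -> R) -> J1 -> R) (f2 : (I -> R) -> J2 -> R)
  : (I -> R) -> (J1 + J2)%type -> R :=
  fun a j => match j with inl j1 => f1 a j1 | inr j2 => f2 a j2 end.

Lemma comb_gp {I J1 J2 : finType} (f1 : (I -> R) -> J1 -> R) (f2 : (I -> R) -> J2 -> R) :
  (forall j, gp (fun a => f1 a j)) -> (forall j, gp (fun a => f2 a j)) ->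
  forall j : (J1 + J2)%type, gp (fun a => comb f1 f2 a j).
Proof. intros H1 H2 [j|j]; simpl; auto. Qed.
Lemma comb_cube {I J1 J2 : Type} (f1 : (I -> R) -> J1 -> R) (f2 : (I -> R) -> J2 -> R) :
  (forall a j, 0 <= f1 a j < 1) -> (forall a j, 0 <= f2 a j < 1) ->
  forall a (j : (J1 + J2)%type), 0 <= comb f1 f2 a j < 1.
Proof. intros H1 H2 a [j|j]; simpl; auto. Qed.

Lemma isint_frac_term c p N : isint N -> isint (c * p * N - fr (c * p) * N).
Proof.
  intros H. replace (c * p * N - fr (c * p) * N) with (gp_floor (c * p) * N) by (unfold fr; ring).
  apply isint_mul; [apply floor_isint|exact H].
Qed.

Lemma frac_lemma (I J : finType) (phi : (I -> R) -> J -> R) (L : list (trip I J)) :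
  Forall validT L -> (forall j, gp (fun a => phi a j)) ->
  exists (J2 : finType) (psi : (I -> R) -> J2 -> R) (L' : list (pr (J + J2)%type)),
   (forall j, gp (fun a => psi a j)) /\ (forall a j, 0 <= psi a j < 1) /\ Forall validP L' /\
   forall a n, isint (evalL L a (join_param (phi a) n) - evalPN L' (join_param (comb phi psi a) n)).
Proof.
  intros HL Hphi. induction L as [|t L IH].
  - exists unit, (fun _ _ => 0), nil. repeat split.
    + intros; apply gp_const.
    + intros; lra.
    + intros; lra.
    + constructor.
    + intros a n. simpl. exists 0%Z. simpl. ring.
  - inversion HL as [|? ? Ht HL']; subst.
    destruct (IH HL') as [J2 [psi [L' [Hpsi [Hcube [HV Hint]]]]]].
    destruct Ht as [A1 [A2 [A3 [A4 A5]]]].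
    pose (sig := fun j : (J + J2)%type => match j with inl j => @inl J (J2 + unit)%type j | inr j2 => inr (inl j2) end).
    exists (J2 + unit)%type,
      (fun a j => match j with inl j2 => psi a j2 | inr _ => fr (tc t a * tP t (phi a)) end),
      (Pr (fun b => b (inr (inr tt))) (fun x => tN t (fun o => x (option_map inl o))) :: map (liftP sig) L').
    refine (conj _ (conj _ (conj _ _))).
    + intros [j|j].
      * apply Hpsi.
      * apply gp_fr. apply gp_mul; auto.
        apply (gp_subst _ _ (tP t) (fun j a => phi a j)); auto.
    + intros a0 [j|j]; [apply Hcube| apply fr_bounds].
    + constructor.
      * unfold validP; simpl. repeat split.
        -- apply gp_coord.
        -- apply gp_lift_x; auto.
        -- intros b n. rewrite join_comp. apply A5.
      * apply validP_lift; auto.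
    + intros a n. simpl. rewrite evalPN_lift. rewrite !join_comp.
      match goal with |- isint (?E0 - (_ + evalPN L' (join_param ?f n))) =>
        replace f with (comb phi psi a) by (apply functional_extensionality; intros [j|j]; reflexivity) end.
      destruct (Hint a n) as [z Hz].
      match goal with |- isint (?A + ?B - (?C + ?D)) =>
        replace (A + B - (C + D)) with ((A - C) + (B - D)) by ring end.
      apply isint_add; [| exists z; exact Hz].
      apply isint_frac_term. apply A5.
Qed.

Definition Rep (I : finType) (G : (option I -> R) -> R) : Prop :=
  exists (J : finType) (phi : (I -> R) -> J -> R) (L : list (trip I J)),
    (forall j, gp (fun a => phi a j)) /\ (forall a j, 0 <= phi a j < 1) /\ Forall validT L /\
    forall a n, G (join_param a n) = evalL L a (join_param (phi a) n).

Definition negP {I J} (p : pr J) : trip I J := Trip (fun _ => -1) (pP p) (pN p).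

Lemma evalL_neg {I J} (L : list (pr J)) (a : I -> R) x : evalL (map negP L) a x = - evalPN L x.
Proof. induction L as [|p L IH]. - simpl. ring. - simpl. rewrite IH. ring. Qed.

Lemma valid_neg {I J : finType} (L : list (pr J)) : Forall validP L -> Forall (@validT I J) (map negP L).
Proof.
  intros H. apply Forall_map. eapply Forall_impl; [|exact H].
  intros p [B1 [B2 B3]]. unfold validT; simpl. refine (conj _ (conj _ (conj _ (conj _ _)))); auto.
  - apply gp_const.
  - intros _. exists (-1)%Z. reflexivity.
Qed.

Lemma join_inl {I J1 J2 : Type} (f1 : (I -> R) -> J1 -> R) (f2 : (I -> R) -> J2 -> R) a n :
  (fun o => join_param (comb f1 f2 a) n (option_map inl o)) = join_param (f1 a) n.
Proof. apply functional_extensionality. intros [o|]; reflexivity. Qed.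
Lemma join_inr {I J1 J2 : Type} (f1 : (I -> R) -> J1 -> R) (f2 : (I -> R) -> J2 -> R) a n :
  (fun o => join_param (comb f1 f2 a) n (option_map inr o)) = join_param (f2 a) n.
Proof. apply functional_extensionality. intros [o|]; reflexivity. Qed.

Lemma rep_all (I : finType) (G : (option I -> R) -> R) : gp G -> Rep I G.
Proof.
  intros HG. induction HG as [c|[i|]|f g Hf IHf Hg IHg|f g Hf IHf Hg IHg|f Hf IHf].
  - exists unit, (fun _ _ => 0), [Trip (fun _ => 1) (fun _ => c) (fun _ => 1)].
    refine (conj _ (conj _ (conj _ _))).
    + intros; apply gp_const.
    + intros; lra.
    + constructor; [|constructor]. unfold validT; simpl.
      refine (conj _ (conj _ (conj _ (conj _ _)))); try apply gp_const; intros; apply isint_1.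
    + intros a n. simpl. ring.
  - exists unit, (fun a _ => fr (a i)),
      [Trip (fun a => gp_floor (a i)) (fun _ => 1) (fun _ => 1); Trip (fun _ => 1) (fun b => b tt) (fun _ => 1)].
    refine (conj _ (conj _ (conj _ _))).
    + intros; apply gp_fr; apply gp_coord.
    + intros; apply fr_bounds.
    + constructor; [|constructor; [|constructor]]; unfold validT; simpl;
      refine (conj _ (conj _ (conj _ (conj _ _)))); try apply gp_const; try (intros; apply isint_1).
      * apply gp_int; apply gp_coord.
      * intros; apply floor_isint.
      * apply gp_coord.
    + intros a n. simpl. unfold fr. ring.
  - exists unit, (fun _ _ => 0), [Trip (fun _ => 1) (fun _ => 1) (fun x => x None)].
    refine (conj _ (conj _ (conj _ _))).
    + intros; apply gp_const.
    + intros; lra.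
    + constructor; [|constructor]. unfold validT; simpl.
      refine (conj _ (conj _ (conj _ (conj _ _)))); try apply gp_const; try (intros; apply isint_1).
      * apply gp_coord.
      * intros b n. exists n. reflexivity.
    + intros a n. simpl. ring.
  - destruct IHf as [J1 [phi1 [L1 [P1 [C1 [V1 E1]]]]]].
    destruct IHg as [J2 [phi2 [L2 [P2 [C2 [V2 E2]]]]]].
    exists (J1 + J2)%type, (comb phi1 phi2), (map (liftT inl) L1 ++ map (liftT inr) L2).
    refine (conj _ (conj _ (conj _ _))).
    + apply comb_gp; auto.
    + apply comb_cube; auto.
    + apply Forall_app; split; apply valid_lift; auto.
    + intros a n. rewrite evalL_app !evalL_lift join_inl join_inr E1 E2. reflexivity.
  - destruct IHf as [J1 [phi1 [L1 [P1 [C1 [V1 E1]]]]]].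
    destruct IHg as [J2 [phi2 [L2 [P2 [C2 [V2 E2]]]]]].
    exists (J1 + J2)%type, (comb phi1 phi2), (mulL (map (liftT inl) L1) (map (liftT inr) L2)).
    refine (conj _ (conj _ (conj _ _))).
    + apply comb_gp; auto.
    + apply comb_cube; auto.
    + apply valid_mulL; apply valid_lift; auto.
    + intros a n. rewrite evalL_mulL !evalL_lift join_inl join_inr E1 E2. reflexivity.
  - destruct IHf as [J [phi [L [P1 [C1 [V1 E1]]]]]].
    destruct (frac_lemma I J phi L V1 P1) as [J2 [psi [L' [Pp [Cp [VL' Hint]]]]]].
    exists (J + J2)%type, (comb phi psi),
      (map (liftT inl) L ++ (Trip (fun _ => 1) (fun _ => 1) (fun x => gp_floor (evalPN L' x))) :: map negP L').
    refine (conj _ (conj _ (conj _ _))).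
    + apply comb_gp; auto.
    + apply comb_cube; auto.
    + apply Forall_app; split; [apply valid_lift; auto|].
      constructor; [|apply valid_neg; auto].
      unfold validT; simpl.
      refine (conj _ (conj _ (conj _ (conj _ _)))); try apply gp_const; try (intros; apply isint_1).
      * apply gp_int. apply gp_evalPN; auto.
      * intros; apply floor_isint.
    + intros a n. rewrite evalL_app evalL_lift join_inl. simpl. rewrite evalL_neg E1.
      destruct (Hint a n) as [z Hz].
      set (E := evalL L a (join_param (phi a) n)) in *.
      set (X := evalPN L' (join_param (comb phi psi a) n)) in *.
      replace E with (X + IZR z) by lra. rewrite floor_add_int. ring.
Qed.

Definition scaleL {I J} (m : R) (L : list (trip I J)) : list (trip I J) :=
  map (fun t => Trip (tc t) (fun b => m * tP t b) (tN t)) L.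
Lemma evalL_scale {I J} m (L : list (trip I J)) a x : evalL (scaleL m L) a x = m * evalL L a x.
Proof. induction L as [|t L IH]. - simpl. ring. - simpl. rewrite IH. ring. Qed.
Lemma valid_scale {I J : finType} m (L : list (trip I J)) : Forall validT L -> Forall validT (scaleL m L).
Proof.
  intros H. apply Forall_map. eapply Forall_impl; [|exact H].
  intros t [A1 [A2 [A3 [A4 A5]]]]. unfold validT; simpl.
  refine (conj _ (conj _ (conj _ (conj _ _)))); auto.
  apply gp_mul; auto. apply gp_const.
Qed.

Lemma digits_floor (M : nat) y : 0 <= y < INR M -> digits M (gp_floor y).
Proof.
  intros [H1 H2]. destruct (floor_isint y) as [z Hz].
  pose proof (floor_bounds y) as [B1 B2]. rewrite Hz in B1 B2 |- *.
  assert (Z0 : (-1 < z)%Z). { apply lt_IZR. simpl. lra. }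
  assert (Z1 : (z < Z.of_nat M)%Z). { apply lt_IZR. rewrite <- INR_IZR_INZ. lra. }
  exists (Z.to_nat z). split; [lia|].
  rewrite INR_IZR_INZ. rewrite Z2Nat.id; [reflexivity|lia].
Qed.

Theorem proposition3p5 (M : nat) (I : finType) (g : (I -> R) -> Z -> R) :
  gp_param I (full_space I) (digits M) g ->
  exists (J : finType) (h : (J -> R) -> Z -> R),
    gp_param J (unit_cube J) (digits M) h /\
    gp_extends I J (full_space I) (unit_cube J) g h.
Proof.
  intros [G [HG Hg]].
  assert (HM : 0 < INR M).
  { destruct (Hg (fun _ => 0) Logic.I 0%Z) as [_ [k [Hk _]]]. apply lt_0_INR. lia. }
  destruct (rep_all I G HG) as [J [phi [L [P1 [C1 [V1 E1]]]]]].
  destruct (frac_lemma I J phi (scaleL (/ INR M) L) (valid_scale _ _ V1) P1)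
    as [J2 [psi [L' [Pp [Cp [VL' Hint]]]]]].
  exists (J + J2)%type, (fun b n => gp_floor (INR M * fr (evalPN L' (join_param b n)))).
  split.
  - exists (fun x => gp_floor (INR M * fr (evalPN L' x))). split.
    + apply gp_int. apply (gp_mul (fun _ => INR M)); [apply gp_const|]. apply gp_fr. apply gp_evalPN; auto.
    + intros b _ n. split; [reflexivity|]. apply digits_floor.
      pose proof (fr_bounds (evalPN L' (join_param b n))) as [F1 F2]. split.
      * apply Rmult_le_pos; [lra| exact F1].
      * rewrite <- (Rmult_1_r (INR M)) at 2. apply Rmult_lt_compat_l; [lra| exact F2].
  - exists (comb phi psi). refine (conj _ (conj _ _)).
    + apply comb_gp; auto.
    + intros a _. unfold unit_cube. apply comb_cube; auto.
    + intros a _ n. destruct (Hg a Logic.I n) as [Hga [k [Hk Hgk]]].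
      rewrite Hga. rewrite Hga in Hgk. rewrite E1 in Hgk |- *.
      destruct (Hint a n) as [z Hz]. rewrite evalL_scale in Hz.
      set (E := evalL L a (join_param (phi a) n)) in *.
      set (X := evalPN L' (join_param (comb phi psi a) n)) in *.
      rewrite <- (fr_int_diff _ _ _ Hz).
      assert (Hk' : (INR k < INR M)). { apply lt_INR. lia. }
      pose proof (pos_INR k).
      assert (Hb : 0 <= / INR M * E < 1).
      { rewrite Hgk. split. apply Rmult_le_pos; [left; apply Rinv_0_lt_compat; lra| lra].
        apply (Rmult_lt_reg_l (INR M)); auto. field_simplify; lra. }
      rewrite (fr_id _ Hb).
      replace (INR M * (/ INR M * E)) with E by (field; lra).
      rewrite Hgk INR_IZR_INZ floor_int. reflexivity.
Qed.
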